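(* Let $R$ be a ring, $X$ a compact metrizable space, $E\subset X$ a non-empty closed subspace with $Y=X\setminus E$ dense in $X$. Two free $(X,Y,E)$-controlled $R$-modules $R\langle A\rangle_\alpha$ and $R\langle B\rangle_\beta$ are isomorphic in the category of free controlled $R$-modules and controlled homomorphisms if and only if (1) the underlying $R$-modules $R\langle A\rangle$ and $R\langle B\rangle$ are isomorphic, and (2) they have the same support, $\alpha(A)'=\beta(B)'$. If the supports are non-empty then condition (1) holds automatically. Moreover, every compact subset $K\subset E$ is the support of some free controlled $R$-module.
   Context: $R\langle A\rangle$ denotes the free right $R$-module with basis $A$; the carrier $\operatorname{carr}(x)\subset A$ of $x\in R\langle A\rangle$ is the finite set of basis elements appearing with nonzero coefficient in $x$. A free controlled $R$-module $R\langle A\rangle_\alpha$ is a free $R$-module $R\langle A\rangle$ together with a function $\alpha\colon A\to Y$ such that $\alpha^{-1}(K)$ is finite for every compact $K\subset Y$. Its support is the derived set $\alpha(A)'$ of $\alpha(A)$ in $X$ (which lies in $E$). A controlled homomorphism $\varphi\colon R\langle A\rangle_\alpha\to R\langle B\rangle_\beta$ is an $R$-module homomorphism such that for every $x\in E$ and every neighbourhood $U$ of $x$ in $X$ there is a neighbourhood $V\subset U$ of $x$ in $X$ with $\beta(\operatorname{carr}(\varphi(a)))\subset U$ for all $a\in A$ with $\alpha(a)\in V$. *)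

(* Defs.v *)
From HB Require Import structures.
From mathcomp Require Import all_boot all_order all_algebra.
From mathcomp Require Import all_classical all_reals all_analysis.
Set Implicit Arguments. Unset Strict Implicit. Unset Printing Implicit Defensive.
Import Order.TTheory GRing.Theory Num.Theory.
Local Open Scope classical_set_scope.
Local Open Scope ring_scope.

(** The free right R-module R<A> with basis A: finitely supported functions A -> R. *)
Record fsm (R : nzRingType) (A : Type) := FSM {
  fsm_fun :> A -> R;
  fsm_fin : finite_set [set a | fsm_fun a != 0] }.

Section FreeModule.
Context {R : nzRingType} {A : Type}.

Definition carr (x : fsm R A) : set A := [set a | x a != 0].

Lemma fsm_zero_fin : finite_set [set a : A | (0 : R) != 0].
Proof. by apply: (sub_finite_set _ (finite_set0 A)) => a /=; rewrite eqxx. Qed.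
Definition fsm_zero : fsm R A := FSM fsm_zero_fin.

Lemma fsm_add_fin (x y : fsm R A) : finite_set [set a | x a + y a != 0].
Proof.
have hU : finite_set ([set a | x a != 0] `|` [set a | y a != 0]).
  by rewrite finite_setU; split; [exact: fsm_fin | exact: fsm_fin].
apply: (sub_finite_set _ hU).
move=> a /= h; case: (eqVneq (x a) 0) => [xa|]; [right|by left].
by apply: contraNneq h => ya; rewrite xa ya addr0.
Qed.
Definition fsm_add (x y : fsm R A) : fsm R A := FSM (fsm_add_fin x y).

Lemma fsm_scale_fin (x : fsm R A) (r : R) : finite_set [set a | x a * r != 0].
Proof.
apply: (sub_finite_set _ (fsm_fin x)) => a /= h.
by apply: contraNneq h => ->; rewrite mul0r.
Qed.
Definition fsm_scale (x : fsm R A) (r : R) : fsm R A := FSM (fsm_scale_fin x r).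

Lemma delta_fin (a : A) : finite_set [set b | (if `[< b = a >] then 1 else 0 : R) != 0].
Proof.
apply: (sub_finite_set _ (finite_set1 a)) => b /=.
by case: asboolP => // _; rewrite eqxx.
Qed.
Definition delta (a : A) : fsm R A := FSM (delta_fin a).

End FreeModule.

Definition is_rhom {R : nzRingType} {A B : Type} (f : fsm R A -> fsm R B) :=
  (forall x y, f (fsm_add x y) = fsm_add (f x) (f y)) /\
  (forall x r, f (fsm_scale x r) = fsm_scale (f x) r).

Definition module_iso (R : nzRingType) (A B : Type) :=
  exists (f : fsm R A -> fsm R B) (g : fsm R B -> fsm R A),
    [/\ is_rhom f, is_rhom g, cancel f g & cancel g f].

(** (alpha : A -> Y) makes R<A>_alpha a free (X,Y,E)-controlled module,
    where Y = X \ E : alpha lands in Y and alpha^-1(K) is finite for every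
    compact K contained in Y. *)
Definition controlled_basis {X : topologicalType} (E : set X) {A : Type}
    (alpha : A -> X) :=
  (forall a, ~ E (alpha a)) /\
  (forall K : set X, K `<=` ~` E -> compact K -> finite_set (alpha @^-1` K)).

Definition fcm_support {X : topologicalType} {A : Type} (alpha : A -> X) : set X :=
  limit_point (range alpha).

Definition controlled {X : topologicalType} (E : set X) {R : nzRingType}
    {A B : Type} (alpha : A -> X) (beta : B -> X) (f : fsm R A -> fsm R B) :=
  forall x, E x -> forall U, nbhs x U ->
    exists V, [/\ nbhs x V, V `<=` U &
      forall a, V (alpha a) -> beta @` carr (f (delta a)) `<=` U].

Definition controlled_iso {X : topologicalType} (E : set X) (R : nzRingType)
    {A B : Type} (alpha : A -> X) (beta : B -> X) :=
  exists (f : fsm R A -> fsm R B) (g : fsm R B -> fsm R A),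
    [/\ is_rhom f, is_rhom g, controlled E alpha beta f,
        controlled E beta alpha g & cancel f g /\ cancel g f].

(* Main.v *)
Require Import Defs.
From HB Require Import structures.
From mathcomp Require Import all_boot all_order all_algebra.
From mathcomp Require Import all_classical all_reals all_analysis.
From mathcomp Require Import lra.
Import Order.TTheory GRing.Theory Num.Theory.
Local Open Scope classical_set_scope.
Local Open Scope ring_scope.
Set Implicit Arguments. Unset Strict Implicit. Unset Printing Implicit Defensive.
Section Gen.
Context {K : realType} {X : metricType K}.
Implicit Types (x y z : X) (G : set X).

Lemma ball_openM x (r : K) : open (ball x r).
Proof.
rewrite openE => y bxy; rewrite /interior.
have hb := bxy; rewrite ballEmdist /= in hb.
apply/nbhs_ballP; exists (r - mdist x y) => /=; first by rewrite subr_gt0.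
move=> z; rewrite !ballEmdist /= => hz.
apply: (le_lt_trans (metric_triangle x y z)).
by rewrite -ltrBrDl.
Qed.

Lemma fin_nbhs x G : finite_set G -> ~ G x -> nbhs x (~` G).
Proof.
move=> fG nGx.
have cG : closed G by apply: compact_closed; [exact: metric_hausdorff|exact: finite_compact].
by apply: open_nbhs_nbhs; split => //; exact: closed_openC.
Qed.

End Gen.
Section Ctl.
Context {K : realType} {X : metricType K}.

Lemma lim_in_E (E : set X) (A : Type) (alpha : A -> X) :
  compact [set: X] -> closed E -> controlled_basis E alpha ->
  fcm_support alpha `<=` E.
Proof.
move=> cX cE [aY afin] x lx; apply: contrapT => nEx.
have : nbhs x (~` E) by apply: open_nbhs_nbhs; split => //; exact: closed_openC.
move=> /nbhs_ballP [r /= r0 sub].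
set B := closed_ball x (r / 2).
have BY : B `<=` ~` E by move=> z /(subset_closure_half r0); apply: sub.
have cB : compact B by apply: (subclosed_compact _ cX) => //; exact: closed_ball_closed.
have fP := afin B BY cB.
set G := (alpha @` (alpha @^-1` B)) `\ x.
have fG : finite_set G by apply: (sub_finite_set _ (finite_image alpha fP)) => z [].
have nGx : ~ G x by move=> [_ /(_ erefl)].
have hU : nbhs x (ball x (r/2) `&` ~` G).
  by apply: filterI; [exact: nbhsx_ballx (divr_gt0 r0 (ltr0Sn _ _))|exact: fin_nbhs fG nGx].
have [y [yx [a _ ya] [ba nG]]] := lx _ hU; subst y.
apply: nG; split; last by move=> /= h; move: yx; rewrite h eqxx.
by exists a => //; exact: subset_closed_ball.
Qed.

End Ctl.
Lemma natSinv {K : realType} (r : K) : 0 < r -> exists n : nat, n.+1%:R^-1 < r.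
Proof.
move=> r0; have [N _ hN] := near_infty_natSinv_lt (PosNum r0).
by exists N; exact: (hN N (leqnn N)).
Qed.

Section Cnt.
Context {K : realType} {X : metricType K}.

Lemma cb_countable (E : set X) (A : Type) (alpha : A -> X) :
  compact [set: X] -> closed E -> controlled_basis E alpha ->
  countable [set: A].
Proof.
move=> cX cE [aY afin].
pose D (n : nat) := [set y | exists2 e, E e & ball e (n.+1%:R^-1) y].
have oD n : open (D n).
  rewrite openE => y [e Ee bey]; rewrite /interior.
  have := ball_openM e (n.+1%:R^-1); rewrite openE => /(_ y bey).
  by apply: filterS => z bz; exists e.
have cC n : compact (~` D n).
  by apply: (subclosed_compact _ cX) => //; exact: open_closedC.
have CY n : ~` D n `<=` ~` E.
  by move=> z Cz Ez; apply: Cz; exists z => //; exact: ballxx.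
have cov : [set: A] `<=` \bigcup_(n in [set: nat]) alpha @^-1` (~` D n).
  move=> a _.
  have : nbhs (alpha a) (~` E).
    by apply: open_nbhs_nbhs; split; [exact: closed_openC|exact: aY].
  move=> /nbhs_ballP [r /= r0 sub]; have [n hn] := natSinv r0.
  exists n => // -[e Ee be]; apply: (sub e) Ee.
  by apply: (le_ball (ltW hn)); exact: ball_sym.
apply: (sub_countable (subset_card_le cov)).
apply: bigcup_countable; first exact: countableP.
by move=> n _; apply: finite_set_countable; exact: afin.
Qed.

Lemma cb_infinite (E : set X) (A : Type) (alpha : A -> X) :
  fcm_support alpha !=set0 -> infinite_set [set: A].
Proof.
move=> [x lx] fA.
have fR : finite_set (range alpha) by exact: finite_image.
have fG : finite_set (range alpha `\ x) by apply: (sub_finite_set _ fR) => z [].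
have nGx : ~ (range alpha `\ x) x by move=> [_ /(_ erefl)].
have [y [yx ry nG]] := lx _ (fin_nbhs fG nGx).
by apply: nG; split => // /= h; move: yx; rewrite h eqxx.
Qed.

Lemma cb_enum (A : Type) : countable [set: A] -> infinite_set [set: A] ->
  exists (e : nat -> A) (e' : A -> nat), cancel e e' /\ cancel e' e.
Proof.
move=> cA iA; have /card_set_bijP [f [_ fi fs]] := eq_card_nat cA iA.
have : forall n : nat, exists a, f a = n.
  by move=> n; have [a _ <-] := fs n I; exists a.
move=> /choice [g hg]; exists g, f; split => // a.
by apply: fi; rewrite ?inE //; rewrite hg.
Qed.

End Cnt.
Lemma fsm_ext (R : nzRingType) (A : Type) (x y : fsm R A) :
  (forall a, x a = y a) -> x = y.
Proof.
case: x => f fx; case: y => g gy /= h.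
have efg : f = g by apply: funext.
subst g; congr FSM; exact: Prop_irrelevance.
Qed.

Section Transp.
Context {R : nzRingType} {A B : Type} (phi : A -> B) (psi : B -> A).
Context (h1 : cancel phi psi) (h2 : cancel psi phi).

Lemma transp_fin (x : fsm R A) : finite_set [set b | x (psi b) != 0].
Proof.
apply: (sub_finite_set _ (finite_image phi (fsm_fin x))).
by move=> b /= hb; exists (psi b) => //; rewrite h2.
Qed.

Definition transp (x : fsm R A) : fsm R B := FSM (transp_fin x).

Lemma transp_rhom : is_rhom transp.
Proof. by split => *; apply: fsm_ext. Qed.

Lemma transp_delta a b : transp (delta a) b != 0 -> b = phi a.
Proof.
rewrite /= ; case: asboolP => [<- _|]; first by rewrite h2.
by rewrite eqxx.
Qed.

End Transp.

Lemma transpK (R : nzRingType) (A B : Type) (phi : A -> B) (psi : B -> A)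
  (h1 : cancel phi psi) (h2 : cancel psi phi) :
  cancel (@transp R A B phi psi h2) (@transp R B A psi phi h1).
Proof. by move=> x; apply: fsm_ext => a /=; rewrite h1. Qed.

Lemma bij_module_iso (R : nzRingType) (A B : Type) (phi : A -> B) (psi : B -> A) :
  cancel phi psi -> cancel psi phi -> module_iso R A B.
Proof.
move=> h1 h2; exists (transp h2), (transp h1); split.
- exact: transp_rhom.
- exact: transp_rhom.
- exact: transpK.
- exact: transpK.
Qed.
Section CtrlLem.
Context {K : realType} {X : metricType K} {R : nzRingType}.

Lemma ctrl_of_close (E : set X) (A B : Type) (alpha : A -> X) (beta : B -> X)
  (phi : A -> B) (psi : B -> A) (h2 : cancel psi phi) :
  (forall x, E x -> forall eps : K, 0 < eps -> exists2 V, nbhs x V &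
     forall a, V (alpha a) -> ball x eps (beta (phi a))) ->
  controlled E alpha beta (@transp R A B phi psi h2).
Proof.
move=> hc x Ex U /nbhs_ballP [eps /= e0 sub].
have [V nV hV] := hc x Ex eps e0.
exists (V `&` ball x eps); split.
- by apply: filterI => //; exact: nbhsx_ballx.
- by move=> z [_ /sub].
- move=> a [Va _] _ [b hb <-]; rewrite (transp_delta hb).
  by apply: sub; exact: hV.
Qed.

Lemma ctrl_empty (E : set X) (A B : Type) (alpha : A -> X) (beta : B -> X)
  (f : fsm R A -> fsm R B) :
  (forall a, ~ E (alpha a)) -> fcm_support alpha = set0 ->
  controlled E alpha beta f.
Proof.
move=> aY s0 x Ex U nU.
case: (pselect (exists W, nbhs x W /\ forall a, ~ W (alpha a))) => [[W [nW hW]]|nex].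
  exists (U `&` W); split; [exact: filterI|by move=> z []|by move=> a [_ /hW]].
exfalso; have : fcm_support alpha x; last by rewrite s0.
move=> W nW; apply: contrapT => hn; apply: nex; exists W; split => // a Wa.
apply: hn; exists (alpha a); split; [|by exists a|by []].
by apply/eqP => h; apply: (aY a); rewrite h.
Qed.

Lemma rhom_zero (A B : Type) (f : fsm R A -> fsm R B) :
  is_rhom f -> f fsm_zero = fsm_zero.
Proof.
move=> [_ hs].
have z0 (C : Type) (x : fsm R C) : fsm_scale x 0 = fsm_zero.
  by apply: fsm_ext => c /=; rewrite mulr0.
by rewrite -(z0 _ fsm_zero) hs z0.
Qed.

Lemma supp_sub (E : set X) (A B : Type) (alpha : A -> X) (beta : B -> X)
  (f : fsm R A -> fsm R B) (g : fsm R B -> fsm R A) :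
  (forall b, ~ E (beta b)) -> fcm_support alpha `<=` E ->
  controlled E alpha beta f -> is_rhom f -> is_rhom g -> cancel f g ->
  fcm_support alpha `<=` fcm_support beta.
Proof.
move=> bY sE cf rf rg fK x lx U nU.
have Ex := sE x lx.
have [V [nV VU hV]] := cf x Ex U nU.
have [y [yx [a _ ya] Vy]] := lx V nV; subst y.
have nz : exists b, f (delta a) b != 0.
  apply: contrapT => hn.
  have : f (delta a) = fsm_zero.
    apply: fsm_ext => b /=; apply/eqP; apply: contrapT => h; apply: hn.
    by exists b; apply/negP.
  move=> /(congr1 g); rewrite fK -(rhom_zero rf) fK => /(congr1 (fun z => fsm_fun z a)) /=.
  by case: asboolP => // _ /eqP; rewrite oner_eq0.
have [b hb] := nz.
exists (beta b); split.
- by apply/eqP => h; apply: (bY b); rewrite h.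
- by exists b.
- by apply: (hV a Vy); exists b.
Qed.

End CtrlLem.
Lemma fresh_nat (F : seq nat) : exists m, m \notin F.
Proof.
have le_sum x : x \in F -> (x <= sumn F)%N.
  elim: F => //= a F IH; rewrite inE => /orP [/eqP ->|/IH h]; first exact: leq_addr.
  exact: leq_trans h (leq_addl _ _).
by exists (sumn F).+1; apply/negP => /le_sum; rewrite ltnn.
Qed.

Lemma uniq_map_eq (T : eqType) (f : T -> nat) (L : seq T) x y :
  uniq (map f L) -> x \in L -> y \in L -> f x = f y -> x = y.
Proof.
elim: L => //= a L IH /andP [aL uL]; rewrite !inE.
case/orP => [/eqP ->|xL]; case/orP => [/eqP ->|yL] //.
- by move=> h; move: aL; rewrite h (map_f f yL).
- by move=> h; move: aL; rewrite -h (map_f f xL).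
- exact: IH.
Qed.

Section Match.
Context {K : realType} {X : metricType K} (S : set X) (u v : nat -> X).

Definition Gd (p : X) (i : nat) := exists s, S s /\ ball p (i.+1%:R^-1) s.
Definition goodpick (w : nat -> X) (p : X) (k : nat) (F : seq nat) (m : nat) :=
  m \notin F /\ forall i, (i <= k)%N -> Gd p i -> ball p (2 * i.+1%:R^-1) (w m).
Definition pick w p k F := xget 0%N (goodpick w p k F).

Definition infoft (w : nat -> X) := forall s, S s -> forall r : K, 0 < r ->
  forall F : seq nat, exists m, m \notin F /\ ball s r (w m).

Lemma pick_ok w p k F : infoft w -> goodpick w p k F (pick w p k F).
Proof.
move=> hw; apply: xgetPex.
case: (pselect (exists i, (i <= k)%N /\ Gd p i)) => [ex|nex]; last first.
  have [m mF] := fresh_nat F; exists m; split => // i ik Gi.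
  by exfalso; apply: nex; exists i.
pose P := fun i => `[< (i <= k)%N /\ Gd p i >].
have exP : exists i, P i by case: ex => i h; exists i; apply/asboolP.
have ub : forall i, P i -> (i <= k)%N by move=> i /asboolP [].
case: (ex_maxnP exP ub) => J /asboolP [Jk [s [Ss bs]]] Jmax.
have J0 : (0 : K) < J.+1%:R^-1 by rewrite invr_gt0 ltr0Sn.
have [m [mF bm]] := hw s Ss _ J0 F.
exists m; split => // i ik Gi.
have iJ : (i <= J)%N by apply: Jmax; apply/asboolP.
have hle : J.+1%:R^-1 <= i.+1%:R^-1 :> K.
  by rewrite lef_pV2 ?posrE ?ltr0Sn // ler_nat ltnS.
apply: (le_ball _ (ball_triangle bs bm)).
apply: le_trans (lerD hle hle) _.
by rewrite mulr2n mulrDl mul1r.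
Qed.

Definition dom (L : seq (nat * nat)) := map fst L.
Definition rng (L : seq (nat * nat)) := map snd L.
Definition stepA k L := if k \in dom L then L else (k, pick v (u k) k (rng L)) :: L.
Definition stepB k L := if k \in rng L then L else (pick u (v k) k (dom L), k) :: L.
Fixpoint st k := if k is k'.+1 then stepB k' (stepA k' (st k')) else [::].

Definition Q n m :=
  (forall i, (i <= n)%N -> Gd (u n) i -> ball (u n) (2 * i.+1%:R^-1) (v m)) \/
  (forall i, (i <= m)%N -> Gd (v m) i -> ball (v m) (2 * i.+1%:R^-1) (u n)).

Definition Inv L := [/\ uniq (dom L), uniq (rng L) & forall p, p \in L -> Q p.1 p.2].

Hypothesis hu : infoft u.
Hypothesis hv : infoft v.

Lemma stepA_inv k L : Inv L -> Inv (stepA k L).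
Proof.
rewrite /stepA; case: ifP => // kd [d r q].
have [mF gm] := pick_ok (u k) k (rng L) hv.
split => /=; [by rewrite kd d|by rewrite mF r|].
move=> p; rewrite inE => /orP [/eqP -> /=|/q //].
by left.
Qed.

Lemma stepB_inv k L : Inv L -> Inv (stepB k L).
Proof.
rewrite /stepB; case: ifP => // kd [d r q].
have [mF gm] := pick_ok (v k) k (dom L) hu.
split => /=; [by rewrite mF d|by rewrite kd r|].
move=> p; rewrite inE => /orP [/eqP -> /=|/q //].
by right.
Qed.

Lemma st_inv k : Inv (st k).
Proof.
elim: k => [|k IH] /=; first by split.
exact/stepB_inv/stepA_inv.
Qed.

Lemma stepA_sub k L : {subset L <= stepA k L}.
Proof. by rewrite /stepA; case: ifP => _ p pL //; exact: (@mem_behead _ (_ :: L)). Qed.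

Lemma stepB_sub k L : {subset L <= stepB k L}.
Proof. by rewrite /stepB; case: ifP => _ p pL //; exact: (@mem_behead _ (_ :: L)). Qed.

Lemma st_mono k k' : (k <= k')%N -> {subset st k <= st k'}.
Proof.
move=> /subnK <-; elim: (k' - k)%N => [//|d IH] p /IH h.
by rewrite addSn /=; apply/stepB_sub/stepA_sub.
Qed.

Lemma st_dom k : k \in dom (st k.+1).
Proof.
rewrite /= /stepB.
have : k \in dom (stepA k (st k)).
  by rewrite /stepA; case: ifP => // _; rewrite /= inE eqxx.
by case: ifP => // _ h; rewrite /= inE h orbT.
Qed.

Lemma st_rng k : k \in rng (st k.+1).
Proof. by rewrite /= /stepB; case: ifP => // _; rewrite /= inE eqxx. Qed.

Definition Rel n m := exists k, (n, m) \in st k.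

Lemma rel_fun n m m' : Rel n m -> Rel n m' -> m = m'.
Proof.
move=> [k1 h1] [k2 h2].
have [d _ _] := st_inv (maxn k1 k2).
have := uniq_map_eq d (st_mono (leq_maxl k1 k2) h1) (st_mono (leq_maxr k1 k2) h2) erefl.
by case.
Qed.

Lemma rel_inj n n' m : Rel n m -> Rel n' m -> n = n'.
Proof.
move=> [k1 h1] [k2 h2].
have [_ r _] := st_inv (maxn k1 k2).
have := uniq_map_eq r (st_mono (leq_maxl k1 k2) h1) (st_mono (leq_maxr k1 k2) h2) erefl.
by case.
Qed.

Lemma rel_tot n : exists m, Rel n m.
Proof.
have /mapP [[a b] pin /= an] := st_dom n; subst a.
by exists b, n.+1.
Qed.

Lemma rel_sur m : exists n, Rel n m.
Proof.
have /mapP [[a b] pin /= bm] := st_rng m; subst b.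
by exists a, m.+1.
Qed.

Lemma rel_Q n m : Rel n m -> Q n m.
Proof. by move=> [k h]; have [_ _ q] := st_inv k; exact: (q _ h). Qed.

Definition sig n := xget 0%N [set m | Rel n m].
Definition tau m := xget 0%N [set n | Rel n m].

Lemma rel_sig n : Rel n (sig n).
Proof. exact: (xgetPex 0%N (rel_tot n)). Qed.

Lemma rel_tau m : Rel (tau m) m.
Proof. exact: (xgetPex 0%N (rel_sur m)). Qed.

Lemma sigK : cancel sig tau.
Proof. by move=> n; apply: (rel_inj (rel_tau _) (rel_sig n)). Qed.

Lemma tauK : cancel tau sig.
Proof. by move=> m; apply: (rel_fun (rel_sig _) (rel_tau m)). Qed.

Definition eventS (w : nat -> X) := forall r : K, 0 < r ->
  exists N, forall n, (N <= n)%N -> exists s, S s /\ ball (w n) r s.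

Hypothesis gu : eventS u.
Hypothesis gv : eventS v.

Lemma sig_close (e : K) : 0 < e -> exists N, forall n, (N <= n)%N -> (N <= sig n)%N ->
  ball (u n) e (v (sig n)).
Proof.
move=> e0; have [I hI] := natSinv (divr_gt0 e0 (ltr0Sn K 1)).
have I0 : (0 : K) < I.+1%:R^-1 by rewrite invr_gt0 ltr0Sn.
have [N1 h1] := gu I0; have [N2 h2] := gv I0.
have hle : 2 * I.+1%:R^-1 <= e.
  by move: hI; rewrite ltr_pdivlMr // mulrC => /ltW.
exists (maxn I (maxn N1 N2)) => n hn hs.
have In : (I <= n)%N by apply: leq_trans hn; exact: leq_maxl.
have Is : (I <= sig n)%N by apply: leq_trans hs; exact: leq_maxl.
have N1n : (N1 <= n)%N.
  by apply: leq_trans hn; apply: leq_trans (leq_maxr _ _); exact: leq_maxl.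
have N2s : (N2 <= sig n)%N.
  by apply: leq_trans hs; apply: leq_trans (leq_maxr _ _); exact: leq_maxr.
case: (rel_Q (rel_sig n)) => h.
  by apply: (le_ball hle); apply: h => //; exact: h1.
by apply: ball_sym; apply: (le_ball hle); apply: h => //; exact: h2.
Qed.

End Match.
Definition pwrap (T : topologicalType) (x0 : T) : Type := T.
HB.instance Definition _ (T : topologicalType) (x0 : T) := Topological.on (pwrap x0).
HB.instance Definition _ (T : topologicalType) (x0 : T) := isPointed.Build (pwrap x0) x0.
Lemma cover_compactW (T : topologicalType) (A : set T) (x0 : T) : compact A -> cover_compact A.
Proof.
move=> cA.
have : @compact (pwrap x0) A by exact: cA.
rewrite compact_cover; exact.
Qed.

Lemma in_le_sumn (F : seq nat) x : x \in F -> (x <= sumn F)%N.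
Proof.
elim: F => //= a F IH; rewrite inE => /orP [/eqP ->|/IH h]; first exact: leq_addr.
exact: leq_trans h (leq_addl _ _).
Qed.

Section Supp.
Context {K : realType} {X : metricType K}.

Lemma bw (Kc P : set X) : compact Kc -> P `<=` Kc ->
  (forall z, Kc z -> ~ limit_point P z) -> finite_set P.
Proof.
move=> cK PK nl.
have : forall z, exists Of : set X, Kc z ->
    [/\ open Of, Of z & forall y, Of y -> P y -> y = z].
  move=> z; case: (pselect (Kc z)) => Kz; last by exists setT.
  apply: contrapT => hn; apply: (nl z Kz) => U nU.
  apply: contrapT => hy; apply: hn; exists U° => _; split.
  - exact: open_interior.
  - exact: nbhs_singleton (nbhs_interior nU).
  - move=> y Uy Py; apply: contrapT => yz; apply: hy; exists y; split => //.
      by apply/eqP.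
    exact: interior_subset.
move=> /choice [Of hO].
have cov : Kc `<=` \bigcup_(z in Kc) Of z.
  by move=> z Kz; exists z => //; have [] := hO z Kz.
case: (pselect (Kc !=set0)) => [[x0 _]|K0]; last first.
  apply: (sub_finite_set _ (finite_set0 X)) => y /PK Ky; apply: K0; by exists y.
have {}cK := cover_compactW x0 cK.
have [D' sub cov'] := cK X Kc Of (fun z Kz => let: And3 h _ _ := hO z Kz in h) cov.
apply: (sub_finite_set _ (finite_fset D')) => y Py.
have [z zD Ozy] := cov' y (PK y Py).
have Kz : Kc z by have := sub z zD; rewrite inE.
have [_ _ h] := hO z Kz.
by rewrite /= (h y Ozy Py).
Qed.

Lemma lp_mono (P Q : set X) : P `<=` Q -> limit_point P `<=` limit_point Q.
Proof.
move=> PQ z lz U nU; have [y [yz Py Uy]] := lz U nU.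
by exists y; split => //; exact: PQ.
Qed.

Lemma infoft_supp (E : set X) (A : Type) (alpha : A -> X) (e : nat -> A) (e' : A -> nat) :
  (forall a, ~ E (alpha a)) -> fcm_support alpha `<=` E -> cancel e' e ->
  infoft (fcm_support alpha) (alpha \o e).
Proof.
move=> aY sE ee s Ss r r0 F.
set G := (alpha \o e) @` [set` F].
have fG : finite_set G by apply: finite_image; exact: finite_seq.
have nGs : ~ G s by move=> [n _ /= h]; apply: (aY (e n)); rewrite h; exact: sE.
have hU : nbhs s (ball s r `&` ~` G).
  by apply: filterI; [exact: nbhsx_ballx|exact: fin_nbhs].
have [y [ys [a _ ya] [bsy nGy]]] := Ss _ hU; subst y.
exists (e' a); split; last by rewrite /= ee.
apply/negP => hF; apply: nGy; exists (e' a) => //=; by rewrite ee.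
Qed.

Lemma event_supp (E : set X) (A : Type) (alpha : A -> X) (e : nat -> A) (e' : A -> nat) :
  compact [set: X] -> closed E -> controlled_basis E alpha -> cancel e e' ->
  eventS (fcm_support alpha) (alpha \o e).
Proof.
move=> cX cE [aY afin] ee' r r0.
set S := fcm_support alpha.
pose D := [set x | exists2 s, S s & ball s r x].
have oD : open D.
  rewrite openE => y [s Ss bsy]; rewrite /interior.
  have := ball_openM s r; rewrite openE => /(_ y bsy).
  by apply: filterS => z bz; exists s.
have cK : compact (~` D) by apply: (subclosed_compact _ cX) => //; exact: open_closedC.
set P := ~` D `&` range alpha.
have fP : finite_set P.
  apply: (bw cK) => [z []//|z Kz lz].
  have Sz : S z by apply: (lp_mono _ lz) => y [].
  by apply: Kz; exists z => //; exact: ballxx.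
have fA : finite_set (alpha @^-1` P).
  have -> : alpha @^-1` P = \bigcup_(p in P) alpha @^-1` [set p].
    apply/seteqP; split => [a Pa|a [p Pp /= ->//]].
    by exists (alpha a).
  apply: bigcup_finite => // p [_ [a _ <-]].
  apply: afin; last exact: compact_set1.
  by move=> z /= ->; exact: aY.
have fI : finite_set [set n | ~ D (alpha (e n))].
  apply: (sub_finite_set _ (finite_image e' fA)) => n /= hn.
  exists (e n); last by rewrite ee'.
  by split => //; exists (e n).
have [s hs] := (finite_seqP _).1 fI.
exists (sumn s).+1 => n hn; apply: contrapT => hno.
have : n \in s.
  have : [set n | ~ D (alpha (e n))] n.
    move=> [t St btn]; apply: hno; exists t; split => //; exact: ball_sym.
  by rewrite hs.
by move=> /in_le_sumn; rewrite leqNgt hn.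
Qed.

Lemma ctrl_from_close (E : set X) (A B : Type) (alpha : A -> X) (beta : B -> X)
  (e1 : nat -> A) (e1' : A -> nat) (e2 : nat -> B) (sg tu : nat -> nat) :
  (forall a, ~ E (alpha a)) -> cancel e1' e1 -> cancel sg tu ->
  (forall eps : K, 0 < eps -> exists N, forall n, (N <= n)%N -> (N <= sg n)%N ->
     ball (alpha (e1 n)) eps (beta (e2 (sg n)))) ->
  forall x, E x -> forall eps : K, 0 < eps -> exists2 V, nbhs x V &
     forall a, V (alpha a) -> ball x eps (beta (e2 (sg (e1' a)))).
Proof.
move=> aY e1K sgK cl x Ex eps e0.
have e20 : 0 < eps / 2 by rewrite divr_gt0.
have [N hN] := cl _ e20.
set Bad := `I_N `|` tu @` `I_N.
set G := (alpha \o e1) @` Bad.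
have fG : finite_set G.
  by apply: finite_image; rewrite finite_setU; split; [exact: finite_II|apply: finite_image; exact: finite_II].
have nGx : ~ G x by move=> [n _ /= h]; apply: (aY (e1 n)); rewrite h.
exists (ball x (eps / 2) `&` ~` G).
  by apply: filterI; [exact: nbhsx_ballx|exact: fin_nbhs].
move=> a [bxa nG].
have hn : (N <= e1' a)%N.
  rewrite leqNgt; apply/negP => h; apply: nG; exists (e1' a); first by left.
  by rewrite /= e1K.
have hs : (N <= sg (e1' a))%N.
  rewrite leqNgt; apply/negP => h; apply: nG; exists (e1' a); last by rewrite /= e1K.
  by right; exists (sg (e1' a)) => //; rewrite sgK.
have := hN _ hn hs; rewrite e1K => h.
exact: ball_split bxa h.
Qed.

End Supp.
From mathcomp Require Import finmap.
Section Part3.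
Context {K : realType} {X : metricType K}.

Lemma sep (C Kc : set X) : compact C -> closed Kc -> (forall c, C c -> ~ Kc c) ->
  exists N : nat, forall c z, C c -> ball c (N.+1%:R^-1) z -> ~ Kc z.
Proof.
move=> cC clK dis.
have hcov : forall x, C x -> \forall x' \near x & i \near \oo,
    (fun (N : nat) z => forall w, ball z (N.+1%:R^-1) w -> ~ Kc w) i x'.
  move=> x Cx.
  have : nbhs x (~` Kc) by apply: open_nbhs_nbhs; split; [exact: closed_openC|exact: dis].
  move=> /nbhs_ballP [rho /= rho0 sub].
  have rho2 : 0 < rho / 2 by rewrite divr_gt0.
  have [M hM] := natSinv rho2.
  exists (ball x (rho / 2), [set i | (M <= i)%N]); first split.
  - exact: nbhsx_ballx.
  - by exists M.
  move=> [x' i] [/= bx' Mi] w bw; apply: sub.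
  apply: (ball_split bx'); apply: (le_ball _ bw); apply: ltW; apply: le_lt_trans hM.
  by rewrite lef_pV2 ?posrE ?ltr0Sn // ler_nat ltnS.
have := (compact_near_coveringP C).1 cC nat \oo _ _ hcov.
move=> [N _ hN]; exists N => c z Cc; exact: (hN N (leqnn N) c Cc).
Qed.

Lemma part3 (E C : set X) : compact [set: X] -> closed E -> dense (~` E) ->
  C `<=` E -> compact C ->
  exists (A : Type) (alpha : A -> X), controlled_basis E alpha /\ fcm_support alpha = C.
Proof.
move=> cX cE dE CE cC.
have clC : closed C by apply: compact_closed => //; exact: metric_hausdorff.
case: (pselect (C !=set0)) => [[c0 Cc0]|C0]; last first.
  exists False, (fun f : False => match f with end); split.
    split; first by case.
    move=> Kc _ _; apply: (sub_finite_set _ (finite_set0 False)); by case.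
  apply/seteqP; split => z.
    by move=> lz; have [y [_ [[] ] ]] := lz setT filterT.
  by move=> Cz; exfalso; apply: C0; exists z.
have hD : forall n : nat, exists D : {fset X}, {subset D <= C} /\
    C `<=` \bigcup_(d in [set` D]) ball d (n.+1%:R^-1).
  move=> n.
  have r0 : (0 : K) < n.+1%:R^-1 by rewrite invr_gt0 ltr0Sn.
  have [D' sub cov] := cover_compactW c0 cC
    (fun d _ => ball_openM d (n.+1%:R^-1))
    (fun c Cc => ex_intro2 C (fun i => ball i n.+1%:R^-1 c) c Cc (ballxx c r0)).
  by exists D'.
have /choice [Dn hDn] := hD.
have hy : forall p : nat * X, exists y, ~ E y /\ ball p.2 (p.1.+1%:R^-1) y.
  move=> [n c] /=.
  have r0 : (0 : K) < n.+1%:R^-1 by rewrite invr_gt0 ltr0Sn.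
  have [y [by1 by2]] := dE (ball c n.+1%:R^-1) (ex_intro _ c (ballxx c r0)) (ball_openM _ _).
  by exists y.
have /choice [yf hyf] := hy.
pose A := {n : nat & Dn n}.
pose alpha := fun a : A => yf (projT1 a, fsval (projT2 a)).
have aY a : ~ E (alpha a) by have [] := hyf (projT1 a, fsval (projT2 a)).
have aC a : exists2 d, C d & ball d ((projT1 a).+1%:R^-1) (alpha a).
  exists (fsval (projT2 a)); last by have [] := hyf (projT1 a, fsval (projT2 a)).
  by have [sub _] := hDn (projT1 a); apply/set_mem/sub/fsvalP.
have bound : forall Kc : set X, closed Kc -> (forall c, C c -> ~ Kc c) ->
    exists N, forall a, Kc (alpha a) -> (projT1 a < N)%N.
  move=> Kc clK dis; have [N hN] := sep cC clK dis.
  exists N => a Ka; rewrite ltnNge; apply/negP => Na.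
  have [d Cd bd] := aC a; apply: (hN d _ Cd _ Ka).
  apply: (le_ball _ bd).
  by rewrite lef_pV2 ?posrE ?ltr0Sn // ler_nat ltnS.
have finN N : finite_set [set a : A | (projT1 a < N)%N].
  have -> : [set a : A | (projT1 a < N)%N] =
      \bigcup_(n in `I_N) ((fun d : Dn n => existT (fun m => Dn m) n d) @` setT).
    apply/seteqP; split => [[n d] /= hn|a [n /= hn [d _ <-]]] //.
    by exists n => //; exists d.
  by apply: bigcup_finite => [|n _]; [exact: finite_II|apply: finite_image; exact: finite_finset].
exists A, alpha; split.
  split => // Kc KY cK.
  have clK : closed Kc by apply: compact_closed => //; exact: metric_hausdorff.
  have [N hN] := bound Kc clK (fun c Cc Kcc => KY c Kcc (CE c Cc)).
  by apply: (sub_finite_set _ (finN N)) => a /hN.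
apply/seteqP; split => z.
  move=> lz; apply: contrapT => nCz.
  have : nbhs z (~` C) by apply: open_nbhs_nbhs; split; [exact: closed_openC|exact: nCz].
  move=> /nbhs_ballP [rho /= rho0 sub].
  have clK : closed (closed_ball z (rho / 2)) by exact: closed_ball_closed.
  have dis : forall c, C c -> ~ closed_ball z (rho / 2) c.
    by move=> c Cc /(subset_closure_half rho0) /sub.
  have [N hN] := bound _ clK dis.
  set G := (alpha @` [set a : A | (projT1 a < N)%N]) `\ z.
  have fG : finite_set G by apply: (sub_finite_set _ (finite_image alpha (finN N))) => w [].
  have nGz : ~ G z by move=> [_ /(_ erefl)].
  have hU : nbhs z (ball z (rho / 2) `&` ~` G).
    by apply: filterI; [exact: nbhsx_ballx (divr_gt0 rho0 (ltr0Sn _ _))|exact: fin_nbhs].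
  have [y [yz [a _ ya] [bzy nGy]]] := lz _ hU; subst y.
  apply: nGy; split.
    by exists a => //; apply: hN; exact: subset_closed_ball.
  by move=> /= h; move: yz; rewrite h eqxx.
move=> Cz U /nbhs_ballP [eps /= e0 sub].
have e20 : 0 < eps / 2 by rewrite divr_gt0.
have [n hn] := natSinv e20.
have [_ cov] := hDn n.
have [d dD bdz] := cov z Cz.
have dD' : d \in Dn n by [].
pose a : A := existT (fun m => Dn m) n [` dD']%fset.
have [_ bdy] := hyf (n, d).
exists (alpha a); split.
- by apply/eqP => h; apply: (aY a); rewrite h; exact: CE.
- by exists a.
- apply: sub; apply: (@ball_split _ _ d).
    exact: (le_ball (ltW hn) (ball_sym bdz)).
  exact: (le_ball (ltW hn) bdy).
Qed.
End Part3.

Unset Implicit Arguments.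

Theorem proposition3p2 (R : nzRingType) (K : realType) (X : metricType K)
    (E : set X) :
  compact [set: X] -> closed E -> E !=set0 -> dense (~` E) ->
  [/\ (forall (A B : Type) (alpha : A -> X) (beta : B -> X),
         controlled_basis E alpha -> controlled_basis E beta ->
         (controlled_iso E R alpha beta <->
          module_iso R A B /\ fcm_support alpha = fcm_support beta)),
      (forall (A B : Type) (alpha : A -> X) (beta : B -> X),
         controlled_basis E alpha -> controlled_basis E beta ->
         fcm_support alpha !=set0 -> fcm_support beta !=set0 ->
         module_iso R A B) &
      (forall C : set X, C `<=` E -> compact C ->
         exists (A : Type) (alpha : A -> X),
           controlled_basis E alpha /\ fcm_support alpha = C)].
Proof.
move=> cX cE E0 dE; split.
- move=> A B alpha beta ha hb; split.
    move=> [f [g [rf rg cf cg [fK gK]]]]; split; first by exists f, g.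
    apply/seteqP; split.
      exact: (supp_sub hb.1 (lim_in_E cX cE ha) cf rf rg fK).
    exact: (supp_sub ha.1 (lim_in_E cX cE hb) cg rg rf gK).
  move=> [[f [g [rf rg fK gK]]] seq].
  case: (pselect (fcm_support alpha = set0)) => s0.
    exists f, g; split => //; first exact: ctrl_empty ha.1 s0.
    by apply: ctrl_empty hb.1 _; rewrite -seq.
  have nea : fcm_support alpha !=set0 by apply/set0P/eqP.
  have neb : fcm_support beta !=set0 by rewrite -seq.
  have [e1 [e1' [e1K e1K']]] := cb_enum (cb_countable cX cE ha) (@cb_infinite _ _ E _ alpha nea).
  have [e2 [e2' [e2K e2K']]] := cb_enum (cb_countable cX cE hb) (@cb_infinite _ _ E _ beta neb).
  have hu := infoft_supp ha.1 (lim_in_E cX cE ha) e1K'.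
  have hv := infoft_supp hb.1 (lim_in_E cX cE hb) e2K'.
  rewrite -seq in hv.
  have gu := event_supp cX cE ha e1K.
  have gv := event_supp cX cE hb e2K.
  rewrite -seq in gv.
  have sK := sigK hu hv.
  have tK := tauK hu hv.
  have close := sig_close hu hv gu gv.
  set sg := sig _ _ _ in sK tK close.
  set tu := tau _ _ _ in sK tK close.
  pose phi := fun a => e2 (sg (e1' a)).
  pose psi := fun b => e1 (tu (e2' b)).
  have h1 : cancel phi psi by move=> a; rewrite /phi /psi e2K sK e1K'.
  have h2 : cancel psi phi by move=> b; rewrite /phi /psi e1K tK e2K'.
  exists (transp h2), (transp h1); split.
  + exact: transp_rhom.
  + exact: transp_rhom.
  + apply: (@ctrl_of_close K X R E A B alpha beta phi psi h2).
    exact: (@ctrl_from_close K X E A B alpha beta e1 e1' e2 sg tu ha.1 e1K' sK close).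
  + apply: (@ctrl_of_close K X R E B A beta alpha psi phi h1).
    apply: (@ctrl_from_close K X E B A beta alpha e2 e2' e1 tu sg hb.1 e2K' tK).
    move=> eps e0; have [N hN] := close eps e0; exists N => n hn htn.
    by have := hN (tu n) htn; rewrite tK => /(_ hn) /ball_sym.
  + by split; exact: transpK.
- move=> A B alpha beta ha hb sa sb.
  have [e1 [e1' [e1K e1K']]] := cb_enum (cb_countable cX cE ha) (@cb_infinite _ _ E _ alpha sa).
  have [e2 [e2' [e2K e2K']]] := cb_enum (cb_countable cX cE hb) (@cb_infinite _ _ E _ beta sb).
  apply: (@bij_module_iso R A B (fun a => e2 (e1' a)) (fun b => e1 (e2' b))).
    by move=> a; rewrite e2K e1K'.
  by move=> b; rewrite e1K e2K'.
- by move=> C CE cC; exact: part3 cX cE dE CE cC.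
Qed.
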